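(* Let $\mathcal{Y}=\{\boldsymbol{x}_1,\dots,\boldsymbol{x}_m\}$ be a finite subset of the unit ball $B_n(1)=\{\boldsymbol{x}\in\mathbb{R}^n:\|\boldsymbol{x}\|\le1\}$ with $\|\boldsymbol{x}_i\|\ge1-\varepsilon$ for all $i$, where $\varepsilon\in(0,1)$. Let $\beta_1,\beta_2\in\mathbb{R}$ satisfy $$\beta_2(m-1)\le\sum_{j\in\{1,\dots,m\},\,j\ne i}\langle\boldsymbol{x}_i,\boldsymbol{x}_j\rangle\le\beta_1(m-1)\quad\text{for all }i=1,\dots,m,$$ and $$(1-\varepsilon)^2+\beta_2(m-1)>0,\qquad 1+(m-1)\beta_1>0.$$ Let $\bar{\boldsymbol{y}}=\frac1m\sum_{i=1}^m\boldsymbol{x}_i$ and $$\ell(\boldsymbol{x})=\Big\langle\frac{\bar{\boldsymbol{y}}}{\|\bar{\boldsymbol{y}}\|},\boldsymbol{x}\Big\rangle-\frac1{\sqrt m}\Big(\frac{(1-\varepsilon)^2+\beta_2(m-1)}{\sqrt{1+(m-1)\beta_1}}\Big).$$ Then $\ell(\boldsymbol{x}_i)\ge0$ for all $\boldsymbol{x}_i\in\mathcal{Y}$.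
   Context: $\langle\cdot,\cdot\rangle$ and $\|\cdot\|$ denote the Euclidean inner product and norm on $\mathbb{R}^n$. *)

(* Defs.v *)
From HB Require Import structures.
From mathcomp Require Import all_boot all_order all_algebra.
Set Implicit Arguments. Unset Strict Implicit. Unset Printing Implicit Defensive.
Import Order.TTheory GRing.Theory Num.Theory.
Local Open Scope ring_scope.

Definition dotp (R : rcfType) (n : nat) (u v : 'rV[R]_n) : R :=
  \sum_(k < n) u 0 k * v 0 k.

Definition enorm (R : rcfType) (n : nat) (u : 'rV[R]_n) : R :=
  Num.sqrt (dotp u u).

(* Main.v *)
Require Import Defs.
From HB Require Import structures.
From mathcomp Require Import all_boot all_order all_algebra.
From mathcomp Require Import ring lra.
Import Order.TTheory GRing.Theory Num.Theory.
Local Open Scope ring_scope.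

Section H.
Variables (R : rcfType) (n : nat).
Implicit Types u v : 'rV[R]_n.

Lemma dotpC u v : dotp u v = dotp v u.
Proof. by apply: eq_bigr => k _; rewrite mulrC. Qed.

Lemma dotpZl a u v : dotp (a *: u) v = a * dotp u v.
Proof. rewrite /dotp mulr_sumr; apply: eq_bigr => k _; by rewrite mxE mulrA. Qed.

Lemma dotp_suml m (f : 'I_m -> 'rV[R]_n) v :
  dotp (\sum_(i < m) f i) v = \sum_(i < m) dotp (f i) v.
Proof.
rewrite /dotp exchange_big /=; apply: eq_bigr => k _.
by rewrite summxE mulr_suml.
Qed.

Lemma dotp_ge0 u : 0 <= dotp u u.
Proof. by apply: sumr_ge0 => k _; rewrite -expr2 sqr_ge0. Qed.

Lemma enorm_sq u : enorm u ^+ 2 = dotp u u.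
Proof. by rewrite /enorm sqr_sqrtr // dotp_ge0. Qed.

Lemma dotp_eq0 u v : dotp u u = 0 -> dotp u v = 0.
Proof.
move=> H.
have Hk : forall k, u 0 k * u 0 k = 0.
  move=> k; apply: (psumr_eq0P (P:=xpredT) (F:=fun k => u 0 k * u 0 k)) => //.
  by move=> j _; rewrite -expr2 sqr_ge0.
rewrite /dotp big1 // => k _.
have : u 0 k ^+ 2 = 0 by rewrite expr2 Hk.
by move/eqP; rewrite sqrf_eq0 => /eqP ->; rewrite mul0r.
Qed.
End H.

Theorem lemma4 (R : rcfType) (n m : nat) (x : 'I_m -> 'rV[R]_n)
    (eps beta1 beta2 : R) :
  injective x ->
  0 < eps < 1 ->
  (forall i, enorm (x i) <= 1) ->
  (forall i, 1 - eps <= enorm (x i)) ->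
  (forall i, beta2 * (m%:R - 1) <= \sum_(j < m | j != i) dotp (x i) (x j)) ->
  (forall i, \sum_(j < m | j != i) dotp (x i) (x j) <= beta1 * (m%:R - 1)) ->
  0 < (1 - eps) ^+ 2 + beta2 * (m%:R - 1) ->
  0 < 1 + (m%:R - 1) * beta1 ->
  let ybar := m%:R^-1 *: \sum_(i < m) x i in
  let ell := fun v : 'rV[R]_n =>
    dotp ((enorm ybar)^-1 *: ybar) v
    - (Num.sqrt m%:R)^-1 *
      (((1 - eps) ^+ 2 + beta2 * (m%:R - 1)) / Num.sqrt (1 + (m%:R - 1) * beta1)) in
  forall i, 0 <= ell (x i).
Proof.
move=> _ /andP[e0 e1] Hle1 Hge Hb2 Hb1 HA HB ybar ell i.
set A := (1 - eps) ^+ 2 + beta2 * (m%:R - 1) in HA *.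
set B := 1 + (m%:R - 1) * beta1 in HB *.
have m0 : (0 < m)%N by case: m x i {Hb2 Hb1 ybar ell A B HA HB Hle1 Hge} => [|k] ? [].
have mR : (0 : R) < m%:R by rewrite ltr0n.
have Srow : forall j, \sum_(k < m) dotp (x j) (x k)
    = dotp (x j) (x j) + \sum_(k < m | k != j) dotp (x j) (x k).
  by move=> j; rewrite (bigD1 j).
have dlo : forall j, (1 - eps) ^+ 2 <= dotp (x j) (x j).
  move=> j; rewrite -enorm_sq; rewrite lerXn2r ?nnegrE //; first by rewrite subr_ge0 ltW.
  by rewrite /enorm sqrtr_ge0.
have dhi : forall j, dotp (x j) (x j) <= 1.
  move=> j; rewrite -enorm_sq; have := Hle1 j; have := sqrtr_ge0 (dotp (x j) (x j)).
  rewrite /enorm => h0 h1; rewrite expr2; nra.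
have Slo : forall j, A <= \sum_(k < m) dotp (x j) (x k).
  by move=> j; rewrite Srow /A; apply: lerD; [apply: dlo | apply: Hb2].
have Shi : forall j, \sum_(k < m) dotp (x j) (x k) <= B.
  move=> j; rewrite Srow /B; apply: lerD; [apply: dhi|]; rewrite mulrC; apply: Hb1.
set c := dotp ybar (x i).
have cE : c = m%:R^-1 * \sum_(k < m) dotp (x i) (x k).
  by rewrite /c /ybar dotpZl dotp_suml; congr (_ * _); apply: eq_bigr => k _; rewrite dotpC.
have NE : dotp ybar ybar = m%:R^-1 * m%:R^-1 * \sum_(j < m) \sum_(k < m) dotp (x j) (x k).
  rewrite /ybar dotpZl dotpC dotpZl dotp_suml mulrA; congr (_ * _).
  by apply: eq_bigr => j _; rewrite dotpC dotp_suml; apply: eq_bigr => k _; rewrite dotpC.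
have SS : \sum_(j < m) \sum_(k < m) dotp (x j) (x k) <= m%:R * B.
  have : \sum_(j < m) \sum_(k < m) dotp (x j) (x k) <= \sum_(j < m) B by apply: ler_sum => j _; apply: Shi.
  by rewrite sumr_const card_ord mulr_natl.
have clo : A / m%:R <= c.
  rewrite cE (mulrC (m%:R^-1)) ler_pM2r ?invr_gt0 //; exact: Slo.
have cpos : 0 < c by apply: lt_le_trans clo; rewrite divr_gt0.
set N := enorm ybar.
have N0 : 0 <= N by rewrite /N /enorm sqrtr_ge0.
have NN : N ^+ 2 = dotp ybar ybar by rewrite /N enorm_sq.
have Npos : 0 < N.
  rewrite lt_neqAle N0 andbT; apply/eqP => N0'.
  have : dotp ybar ybar = 0 by rewrite -NN -N0' expr0n.
  by move/(@dotp_eq0 _ _ _ (x i)); rewrite -/c => c0; move: cpos; rewrite c0 ltxx.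
set s := Num.sqrt (m%:R : R).
set t := Num.sqrt B.
have s0 : 0 < s by rewrite /s sqrtr_gt0.
have t0 : 0 < t by rewrite /t sqrtr_gt0.
have ss : s ^+ 2 = m%:R by rewrite /s sqr_sqrtr // ltW.
have tt : t ^+ 2 = B by rewrite /t sqr_sqrtr // ltW.
have NB : N ^+ 2 * m%:R <= B.
  rewrite NN NE.
  have h : m%:R^-1 * m%:R^-1 * \sum_(j < m) \sum_(k < m) dotp (x j) (x k) <= m%:R^-1 * m%:R^-1 * (m%:R * B).
    by rewrite ler_pM2l ?mulr_gt0 ?invr_gt0.
  have -> : B = m%:R^-1 * m%:R^-1 * (m%:R * B) * m%:R by field; rewrite gt_eqF.
  by rewrite ler_pM2r.
have Nts : N * s <= t.
  have h : (N * s) ^+ 2 <= t ^+ 2 by rewrite exprMn ss tt.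
  have h2 : 0 <= N * s by rewrite mulr_ge0 // ltW.
  move: h h2; rewrite !expr2; nra.
have cm : A <= c * s ^+ 2.
  by rewrite ss -ler_pdivrMr.
rewrite /ell; cbv beta. rewrite dotpZl -/N -/c -/s -/t subr_ge0.
rewrite -/A.
have h1 : A * (N * s) <= A * t by rewrite ler_pM2l.
have h2 : A * t <= c * s ^+ 2 * t by rewrite ler_pM2r.
have key : A * N <= c * s * t.
  have : (A * N) * s <= (c * s * t) * s.
    rewrite -mulrA; apply: (le_trans h1 (le_trans h2 _)).
    by rewrite expr2 le_eqVlt; apply/orP; left; apply/eqP; ring.
  by rewrite ler_pM2r.
have -> : s^-1 * (A / t) = (A * N) / (s * t * N) by field; rewrite !gt_eqF.
have -> : N^-1 * c = (c * s * t) / (s * t * N) by field; rewrite !gt_eqF.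
by rewrite ler_pM2r // invr_gt0 !mulr_gt0.
Qed.
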